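(* Let $n\ge 2$, $z_1,\dots,z_n\in\mathbb{C}$, $D=\mathrm{diag}(z_1,\dots,z_n)$, $Q=I-\frac1nJ$ and $A=QDQ$. Let $\sigma_1\ge\sigma_2\ge\cdots\ge\sigma_n\ge0$ be the singular values of $A$. Then \[ e_k(\sigma_1,\dots,\sigma_{n-1})\le\frac{n-k}{n}\,e_k(|z_1|,\dots,|z_n|),\qquad k=1,\dots,n-1 . \]
   Context: $I$ is the $n\times n$ identity matrix and $J$ the $n\times n$ all-ones matrix. For a vector $(v_1,\dots,v_m)$, $e_k(v_1,\dots,v_m)=\sum_{1\le i_1<\cdots<i_k\le m}v_{i_1}\cdots v_{i_k}$ is the $k$-th elementary symmetric function. *)

(* Defs.v *)
From HB Require Import structures.
From mathcomp Require Import all_boot all_order all_algebra.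
From mathcomp Require Import complex.
From mathcomp Require Import reals.
Set Implicit Arguments. Unset Strict Implicit. Unset Printing Implicit Defensive.
Import Order.TTheory GRing.Theory Num.Theory.
Local Open Scope ring_scope.

Definition esymf (R : comNzRingType) (m k : nat) (v : 'I_m -> R) : R :=
  \sum_(S : {set 'I_m} | #|S| == k) \prod_(i in S) v i.

Definition adjC (R : rcfType) (m n : nat) (A : 'M[R[i]]_(m, n)) : 'M[R[i]]_(n, m) :=
  (map_mx (@conjc R) A)^T.

Definition singular_values_of (R : rcfType) (n : nat) (A : 'M[R[i]]_n)
  (sigma : 'I_n -> R) : Prop :=
  [/\ forall i, 0 <= sigma i,
      forall i j : 'I_n, (i <= j)%N -> sigma j <= sigma i
    & char_poly (adjC A *m A) = \prod_(i < n) ('X - ((sigma i ^+ 2)%:C)%C%:P)].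

(* Main.v *)
Require Import Defs.
From HB Require Import structures.
From mathcomp Require Import all_boot all_order all_algebra.
From mathcomp Require Import complex.
From mathcomp Require Import reals.
From mathcomp Require Import fingroup perm mpoly spectral sesquilinear.
From mathcomp Require Import ring lra.
Set Implicit Arguments. Unset Strict Implicit. Unset Printing Implicit Defensive.
Import Order.TTheory GRing.Theory Num.Theory.
Local Open Scope ring_scope.
Section Minors.
Variable (C : comNzRingType) (m : nat) (x0 : 'I_m).

Definition sub (S : {set 'I_m}) k (i : 'I_k) : 'I_m := nth x0 (enum S) i.

Lemma sub_mem (S : {set 'I_m}) k (i : 'I_k) : #|S| = k -> sub S i \in S.
Proof. by move=> hS; rewrite /sub -mem_enum mem_nth // -cardE hS. Qed.

Lemma sub_inj (S : {set 'I_m}) k : #|S| = k -> injective (@sub S k).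
Proof.
move=> hS i j /eqP; rewrite /sub nth_uniq ?enum_uniq // -?cardE ?hS //.
by move/eqP/val_inj.
Qed.

Lemma sub_im (S : {set 'I_m}) k : #|S| = k -> [set sub S i | i : 'I_k] = S.
Proof.
move=> hS; apply/eqP; rewrite eqEcard; apply/andP; split.
  by apply/subsetP=> x /imsetP[i _ ->]; apply: sub_mem.
by rewrite card_imset ?card_ord ?hS //; apply: sub_inj.
Qed.

Lemma index_sub (S : {set 'I_m}) k (i : 'I_k) : #|S| = k -> index (sub S i) (enum S) = i.
Proof. by move=> hS; rewrite /sub index_uniq ?enum_uniq // -cardE hS. Qed.

Definition Fcb k (X : 'M[C]_(k, m)) (Y : 'M[C]_(m, k)) (f : {ffun 'I_k -> 'I_m}) :=
  (\prod_i X i (f i)) * \det (\matrix_(i, j) Y (f i) j).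

Lemma CB_gen k (X : 'M[C]_(k, m)) (Y : 'M[C]_(m, k)) :
  \det (X *m Y) = \sum_(R : {set 'I_m} | #|R| == k)
     \det (\matrix_(i, j) X i (sub R j)) * \det (\matrix_(i, j) Y (sub R i) j).
Proof.
have step1 : \det (X *m Y) = \sum_(f : {ffun 'I_k -> 'I_m}) Fcb X Y f.
  rewrite /(\det (X *m Y)).
  transitivity (\sum_(s : 'S_k) \sum_(f : {ffun 'I_k -> 'I_m})
      (-1) ^+ s * ((\prod_i X i (f i)) * \prod_i Y (f i) (s i))).
    apply: eq_bigr => s _; rewrite -big_distrr /=; congr (_ * _).
    rewrite (eq_bigr (fun i => \sum_l X i l * Y l (s i))); last first.
      by move=> i _; rewrite mxE.
    rewrite bigA_distr_bigA /=; apply: eq_bigr => f _.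
    by rewrite big_split.
  rewrite exchange_big /=; apply: eq_bigr => f _.
  rewrite /Fcb /(\det (\matrix_(i, j) Y (f i) j)) big_distrr /=.
  apply: eq_bigr => s _; rewrite mulrCA; congr (_ * (_ * _)).
  by apply: eq_bigr => i _; rewrite mxE.
rewrite step1 (bigID (fun f : {ffun 'I_k -> 'I_m} => injectiveb f)) /=.
rewrite [X in _ + X]big1 ?addr0; last first.
  move=> f /injectivePn [i1 [i2 Di12 Ef12]].
  by rewrite /Fcb (determinant_alternate Di12) ?mulr0 // => j; rewrite !mxE Ef12.
pose g (p : {set 'I_m} * 'S_k) : {ffun 'I_k -> 'I_m} :=
  [ffun i => sub p.1 (p.2 i)].
transitivity (\sum_(p : {set 'I_m} * 'S_k | (#|p.1| == k) && true) Fcb X Y (g p)); last first.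
  rewrite (eq_bigr (fun p => Fcb X Y (g (p.1, p.2)))); last by move=> [R s].
  rewrite -(pair_big (fun R : {set 'I_m} => #|R| == k) (fun _ : 'S_k => true)
     (fun R s => Fcb X Y (g (R, s)))) /=.
  apply: eq_bigr => R /eqP hR.
  rewrite [X in X * _](_ : _ = \sum_(s : 'S_k) (-1) ^+ s *
      \prod_i X i (sub R (s i))); last first.
    by apply: eq_bigr => s _; congr (_ * _); apply: eq_bigr => i _; rewrite mxE.
  rewrite big_distrl /=; apply: eq_bigr => s _.
  rewrite /Fcb /g [RHS]mulrAC [RHS]mulrC; congr (_ * _).
    by apply: eq_bigr => i _; rewrite ffunE.
  rewrite -(det_perm C s) -det_mulmx; congr (\det _).
  by apply/matrixP => i j; rewrite -row_permE !mxE ffunE.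
pose Imf (f : {ffun 'I_k -> 'I_m}) := [set f i | i : 'I_k].
pose pf (f : {ffun 'I_k -> 'I_m}) : {ffun 'I_k -> 'I_k} :=
  [ffun i => insubd i (index (f i) (enum (Imf f)))].
pose h' f : {set 'I_m} * 'S_k := (Imf f, insubd (1%g : 'S_k) (pf f)).
have Himf (f : {ffun 'I_k -> 'I_m}) : injectiveb f -> #|Imf f| = k.
  by move/injectiveP => fi; rewrite card_imset ?card_ord.
have Hpf (f : {ffun 'I_k -> 'I_m}) : injectiveb f -> forall i, val (pf f i) = index (f i) (enum (Imf f)).
  move=> fi i; rewrite ffunE insubdK // unfold_in -[X in (_ < X)%N](Himf f fi) cardE.
  by rewrite index_mem mem_enum; apply/imsetP; exists i.
have Hpfi (f : {ffun 'I_k -> 'I_m}) : injectiveb f -> injectiveb (pf f).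
  move=> fi; apply/injectiveP => i j /(congr1 val); rewrite !Hpf //.
  move/(congr1 (fun x => nth x0 (enum (Imf f)) x)).
  rewrite !nth_index ?mem_enum; try by apply/imsetP; eexists.
  by move/injectiveP: fi; apply.
rewrite (reindex_onto g h'); last first.
  move=> f fi; apply/ffunP => i; rewrite /g /h' /= ffunE.
  have -> : (insubd (1%g : 'S_k) (pf f)) i = pf f i.
    have hh (q : {ffun 'I_k -> 'I_k}) j : injectiveb q ->
        (insubd (1%g : 'S_k) q) j = q j.
      by move=> H; rewrite -pvalE; have := @insubdK _ _ _ (1%g : 'S_k) q H; move=> /= ->.
    exact: hh (Hpfi f fi).
  rewrite /sub; have -> : nat_of_ord (pf f i) = index (f i) (enum (Imf f)).
    exact: Hpf.
  by rewrite nth_index // mem_enum; apply/imsetP; exists i.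
apply: eq_bigl => [[R s]] /=; rewrite andbT.
apply/idP/idP.
  move=> /andP[fi /eqP [<- _]]; rewrite Himf //.
move=> /eqP hR.
have gi : injectiveb (g (R, s)).
  apply/injectiveP => i j; rewrite !ffunE /= => /(sub_inj hR).
  exact: perm_inj.
rewrite gi /=; apply/eqP.
have hI : Imf (g (R, s)) = R.
  rewrite -[RHS](sub_im hR); apply/setP => x; apply/imsetP/imsetP.
    by move=> [i _ ->]; rewrite ffunE; exists (s i).
  by move=> [i _ ->]; exists (s^-1 i)%g => //; rewrite ffunE /= permKV.
rewrite /h' hI; congr pair; apply: val_inj => /=.
rewrite insubdK //; last exact: Hpfi.
apply/ffunP => i; apply: val_inj; rewrite Hpf // hI ffunE /= index_sub //; by rewrite pvalE.
Qed.

Definition minor k (X : 'M[C]_m) (S T : {set 'I_m}) :=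
  \det (\matrix_(i < k, j < k) X (sub S i) (sub T j)).

Lemma CB k (X Y : 'M[C]_m) (S T : {set 'I_m}) :
  minor k (X *m Y) S T =
  \sum_(R : {set 'I_m} | #|R| == k) minor k X S R * minor k Y R T.
Proof.
rewrite /minor.
have -> : \matrix_(i < k, j < k) (X *m Y) (sub S i) (sub T j) =
   (\matrix_(i < k, l < m) X (sub S i) l) *m (\matrix_(l < m, j < k) Y l (sub T j)).
  by apply/matrixP => i j; rewrite !mxE; apply: eq_bigr => l _; rewrite !mxE.
rewrite CB_gen; apply: eq_bigr => R _.
by congr (_ * _); congr (\det _); apply/matrixP => i j; rewrite !mxE.
Qed.

Lemma big_sub_prod (S : {set 'I_m}) k (F : 'I_m -> C) : #|S| = k ->
  \prod_(i < k) F (sub S i) = \prod_(j in S) F j.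
Proof.
move=> hS; rewrite -[RHS]big_enum [RHS](big_nth x0) -cardE hS big_mkord.
by apply: eq_bigr.
Qed.

Lemma minor_diag k (d : 'rV[C]_m) (S T : {set 'I_m}) : #|S| = k -> #|T| = k ->
  minor k (diag_mx d) S T = if S == T then \prod_(j in S) d 0 j else 0.
Proof.
move=> hS hT; case: eqP => [<-|neST].
  rewrite /minor (_ : \matrix_(i, j) _ = diag_mx (\row_i d 0 (sub S i))).
    by rewrite det_diag -(big_sub_prod _ hS); apply: eq_bigr => i _; rewrite mxE.
  apply/matrixP => i j; rewrite !mxE (inj_eq (sub_inj hS)).
  by case: eqP => [->|].
have [s sS sT] : exists2 s, s \in S & s \notin T.
  apply/subsetPn/negP => sST; apply: neST.
  by apply/eqP; rewrite eqEcard sST hS hT leqnn.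
have [i0 _ si0] : exists2 i0, i0 \in 'I_k & s = sub S i0.
  by apply/imsetP; rewrite (sub_im hS).
rewrite /minor (expand_det_row _ i0) big1 // => j _.
rewrite !mxE -si0; case: eqP => [eq|]; last by rewrite mulr0n mul0r.
by move: sT; rewrite eq (sub_mem j hT).
Qed.

End Minors.

Lemma det_1_add_rank1 (C : comNzRingType) k (u : 'cV[C]_k) (w : 'rV[C]_k) :
  \det (1%:M + u *m w) = 1 + (w *m u) 0 0.
Proof.
have e1 : block_mx (1%:M : 'M[C]_1) 0 u 1%:M *m block_mx 1%:M (- w) 0 (1%:M + u *m w)
  = block_mx 1%:M (- w) u 1%:M.
  rewrite mulmx_block !mulmx0 !mul0mx !mulmx1 !mul1mx !addr0.
  by rewrite mulmxN addrC addrK.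
have e2 : block_mx (1%:M : 'M[C]_1) (- w) 0 1%:M *m block_mx (1%:M + w *m u) 0 u 1%:M
  = block_mx 1%:M (- w) u 1%:M.
  rewrite mulmx_block !mulmx0 !mul0mx !mulmx1 !mul1mx ?addr0 ?add0r.
  by rewrite mulNmx addrK.
have := congr1 determinant e1; rewrite -e2 !det_mulmx det_lblock det_ublock.
rewrite det_ublock det_lblock !det1 !mul1r !mulr1 => ->.
by rewrite det_mx11 !mxE.
Qed.

Lemma det_1_sub_J (C : comNzRingType) k (c : C) :
  \det (1%:M - c *: const_mx 1 : 'M[C]_k) = 1 - c *+ k.
Proof.
have -> : (1%:M - c *: const_mx 1 : 'M[C]_k) =
   1%:M + (const_mx 1 : 'cV[C]_k) *m (const_mx (- c) : 'rV[C]_k).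
  apply/matrixP => i j; rewrite !mxE big_ord1 !mxE mul1r mulr1 /=.
  by [].
rewrite (det_1_add_rank1 (const_mx 1) (const_mx (- c))) !mxE; congr (_ + _).
rewrite (eq_bigr (fun _ => - c)) ?sumr_const ?card_ord ?mulNrn //.
by move=> i _; rewrite !mxE mulr1.
Qed.

Section Core.
Variable C : numClosedFieldType.
Local Notation "x ^*" := (Num.conj x).

Definition adj m n (X : 'M[C]_(m, n)) : 'M[C]_(n, m) := (map_mx Num.conj X)^T.

Lemma adjM m n p (X : 'M[C]_(m, n)) (Y : 'M[C]_(n, p)) :
  adj (X *m Y) = adj Y *m adj X.
Proof. by rewrite /adj map_mxM trmx_mul. Qed.

Lemma minor_adj n (x0 : 'I_n) k (X : 'M[C]_n) S T :
  minor x0 k (adj X) T S = (minor x0 k X S T)^*.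
Proof.
rewrite /minor -det_map_mx -det_tr; congr (\det _).
by apply/matrixP => i j; rewrite !mxE.
Qed.

Lemma Bessel (I J : finType) (P : pred I) (Q : pred J) (c : I -> J -> C)
    (w : J -> C) (h : I -> C) :
  (forall T T', P T -> P T' ->
     \sum_(U | Q U) (c T U)^* * c T' U = if T == T' then h T else 0) ->
  (forall T, P T -> 0 <= h T <= 1) ->
  \sum_(T | P T) (\sum_(U | Q U) (c T U)^* * w U) *
                 (\sum_(U | Q U) (c T U)^* * w U)^*
  <= \sum_(U | Q U) w U * (w U)^*.
Proof.
move=> orth hb.
pose a T := \sum_(U | Q U) (c T U)^* * w U.
pose v U := \sum_(T | P T) a T * c T U.
have aC T : (a T)^* = \sum_(U | Q U) c T U * (w U)^*.
  by rewrite rmorph_sum; apply: eq_bigr => U _; rewrite rmorphM /= conjCK.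
have e1 : \sum_(U | Q U) w U * (v U)^* = \sum_(T | P T) a T * (a T)^*.
  rewrite (eq_bigr (fun U => \sum_(T | P T) w U * ((a T)^* * (c T U)^*))).
    rewrite exchange_big /=; apply: eq_bigr => T _; set A := (a T)^*.
    rewrite mulrC /a big_distrr /=.
    by apply: eq_bigr => U _; rewrite mulrCA [w U * _]mulrC.
  move=> U _; rewrite rmorph_sum big_distrr /=; apply: eq_bigr => T _.
  by rewrite rmorphM.
have e2 : \sum_(U | Q U) v U * (w U)^* = \sum_(T | P T) a T * (a T)^*.
  rewrite (eq_bigr (fun U => \sum_(T | P T) a T * (c T U * (w U)^*))).
    by rewrite exchange_big /=; apply: eq_bigr => T _; rewrite aC big_distrr.
  by move=> U _; rewrite /v big_distrl /=; apply: eq_bigr => T _; rewrite mulrA.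
have e3 : \sum_(U | Q U) v U * (v U)^* = \sum_(T | P T) a T * (a T)^* * h T.
  rewrite (eq_bigr (fun U => \sum_(T | P T) \sum_(T' | P T')
      a T * (a T')^* * ((c T' U)^* * c T U))); last first.
    move=> U _; rewrite /v rmorph_sum big_distrl /=; apply: eq_bigr => T _.
    rewrite big_distrr /=; apply: eq_bigr => T' _; rewrite rmorphM.
    by rewrite mulrACA [c T U * _]mulrC.
  rewrite exchange_big /=; apply: eq_bigr => T PT.
  rewrite exchange_big /= (bigD1 T) //= [X in _ + X]big1 ?addr0.
    by rewrite -big_distrr /= orth // eqxx.
  move=> T' /andP[PT' neq]; rewrite -big_distrr /= orth //.
  by rewrite (negbTE neq) mulr0.
have pos : 0 <= \sum_(U | Q U) (w U - v U) * (w U - v U)^*.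
  by apply: sumr_ge0 => U _; apply: mul_conjC_ge0.
have : \sum_(U | Q U) (w U - v U) * (w U - v U)^* =
   \sum_(U | Q U) w U * (w U)^* - \sum_(T | P T) a T * (a T)^* * (2 - h T).
  rewrite (eq_bigr (fun U => w U * (w U)^* - (w U * (v U)^* + v U * (w U)^*)
      + v U * (v U)^*)); last first.
    by move=> U _; rewrite rmorphB /=; ring.
  rewrite big_split /= sumrB big_split /= e1 e2 e3.
  have -> : \sum_(T | P T) a T * (a T)^* * (2 - h T) =
     \sum_(T | P T) a T * (a T)^* + \sum_(T | P T) a T * (a T)^*
       - \sum_(T | P T) a T * (a T)^* * h T.
    by rewrite -big_split -sumrB; apply: eq_bigr => T _ /=; ring.
  ring.
move=> eq; rewrite eq subr_ge0 in pos; apply: le_trans pos.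
apply: ler_sum => T PT; rewrite ler_peMr ?mul_conjC_ge0 //.
case/andP: (hb T PT) => _ h1; rewrite lerBrDl.
by have := lerD h1 (lexx (1 : C)).
Qed.


Lemma amgm (x y : C) : `|x| * `|y| <= (`|x| ^+ 2 + `|y| ^+ 2) / 2.
Proof.
have r : `|x| - `|y| \is Num.real by rewrite realB ?normr_real.
have h := exprn_ge0 2 (normr_ge0 (`|x| - `|y|)).
rewrite real_normK // sqrrB addrAC subr_ge0 in h.
by rewrite ler_pdivlMr ?ltr0n // mulr_natr.
Qed.

Lemma core n (x0 : 'I_n) k (Q V G : 'M[C]_n) (z mu hh : 'rV[C]_n) (q : C) :
  adj G *m (Q *m diag_mx z *m Q) *m V = diag_mx mu ->
  adj G *m G = diag_mx hh ->
  (forall j, 0 <= hh 0 j <= 1) ->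
  V *m adj V = 1%:M -> adj Q = Q -> Q *m Q = Q ->
  (forall S : {set 'I_n}, #|S| = k -> minor x0 k Q S S = q) ->
  `|\sum_(T : {set 'I_n} | #|T| == k) \prod_(j in T) mu 0 j|
    <= q * \sum_(S : {set 'I_n} | #|S| == k) \prod_(i in S) `|z 0 i|.
Proof.
move=> eB eG hh01 eV eQ eQQ hq.
set X := adj G *m Q; set Y := Q *m V.
have eB' : X *m diag_mx z *m Y = diag_mx mu by rewrite /X /Y !mulmxA -eB !mulmxA.
have eT (T : {set 'I_n}) : #|T| = k -> \prod_(j in T) mu 0 j =
   \sum_(S : {set 'I_n} | #|S| == k) minor x0 k X T S * \prod_(i in S) z 0 i
       * minor x0 k Y S T.
  move=> hT; rewrite -[LHS](_ : minor x0 k (diag_mx mu) T T = _); last first.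
    by rewrite minor_diag // eqxx.
  rewrite -eB' CB; apply: eq_bigr => S /eqP hS; congr (_ * _).
  rewrite CB (bigD1 S) ?hS //= [X in _ + X]big1 ?addr0.
    by rewrite minor_diag // eqxx.
  by move=> R /andP[/eqP hR neq]; rewrite minor_diag // (negbTE neq) mulr0.
have hy (S : {set 'I_n}) : #|S| = k ->
    \sum_(T : {set 'I_n} | #|T| == k) `|minor x0 k Y S T| ^+ 2 = q.
  move=> hS; rewrite -(hq S hS).
  have -> : Q = Y *m adj Y.
    by rewrite /Y adjM mulmxA -[Q *m V *m _]mulmxA eV mulmx1 eQ eQQ.
  by rewrite CB; apply: eq_bigr => T _; rewrite normCK minor_adj.
have hx (S : {set 'I_n}) : #|S| = k ->
    \sum_(T : {set 'I_n} | #|T| == k) `|minor x0 k X T S| ^+ 2 <= q.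
  move=> hS.
  have H := @Bessel _ _ (fun T : {set 'I_n} => #|T| == k) (fun U : {set 'I_n} => #|U| == k)
    (fun T U => minor x0 k G U T) (fun U => minor x0 k Q U S)
    (fun T => \prod_(j in T) hh 0 j).
  have xE T : minor x0 k X T S = \sum_(U : {set 'I_n} | #|U| == k)
      (minor x0 k G U T)^* * minor x0 k Q U S.
    by rewrite /X CB; apply: eq_bigr => U _; rewrite minor_adj.
  rewrite (eq_bigr (fun T => minor x0 k X T S * (minor x0 k X T S)^*)); last first.
    by move=> T _; rewrite normCK.
  under eq_bigr => T _ do rewrite xE.
  apply: le_trans (H _ _) _.
  - move=> T T' /eqP hT /eqP hT'; rewrite -(minor_diag x0 hh hT hT') -eG CB.
    by apply: eq_bigr => U _; rewrite minor_adj.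
  - move=> T _; rewrite prodr_ge0 ?prodr_ile1 // => j _; by case/andP: (hh01 j).
  have -> : q = minor x0 k (adj Q *m Q) S S by rewrite eQ eQQ hq.
  by rewrite CB le_eqVlt; apply/orP; left; apply/eqP; apply: eq_bigr => U _; rewrite minor_adj mulrC.
rewrite (eq_bigr (fun T => \sum_(S : {set 'I_n} | #|S| == k)
    minor x0 k X T S * \prod_(i in S) z 0 i * minor x0 k Y S T)); last first.
  by move=> T /eqP hT; rewrite eT.
rewrite exchange_big /=; apply: le_trans (ler_norm_sum _ _ _) _.
rewrite big_distrr /=; apply: ler_sum => S /eqP hS.
apply: le_trans (ler_norm_sum _ _ _) _.
have -> : \sum_(T : {set 'I_n} | #|T| == k)
    `|minor x0 k X T S * \prod_(i in S) z 0 i * minor x0 k Y S T| =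
    (\sum_(T : {set 'I_n} | #|T| == k) `|minor x0 k X T S| * `|minor x0 k Y S T|)
      * \prod_(i in S) `|z 0 i|.
  rewrite big_distrl /=; apply: eq_bigr => T _.
  by rewrite !normrM normr_prod mulrAC.
apply: ler_wpM2r; first by apply: prodr_ge0 => i _.
apply: le_trans (ler_sum _ (fun T _ => amgm _ _)) _.
rewrite -mulr_suml big_split /= hy // ler_pdivrMr ?ltr0n // mulr_natr mulr2n.
by rewrite lerD2r hx.
Qed.
End Core.


Lemma esymf_coef (R : idomainType) n k (v : 'I_n -> R) : (k <= n)%N ->
  esymf k v = (-1) ^+ k * (\prod_(i < n) ('X - (v i)%:P))`_(n - k).
Proof.
move=> kn; have := mroots_coeff [tuple v i | i < n] (Ordinal (kn : (k < n.+1)%N)).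
rewrite big_tuple /=.
rewrite (eq_bigr (fun i => 'X - (v i)%:P)); last by move=> i _; rewrite tnth_mktuple.
move=> ->; rewrite mulrA -exprMn mulrNN mulr1 expr1n mul1r.
rewrite /mesym rmorph_sum; apply: eq_bigr => S _.
rewrite rmorph_prod; apply: eq_bigr => i _ /=; by rewrite mevalXU tnth_mktuple.
Qed.

Lemma esymf_perm (R : idomainType) n k (s t : 'I_n -> R) : (k <= n)%N ->
  perm_eq [seq s i | i <- enum 'I_n] [seq t i | i <- enum 'I_n] ->
  esymf k s = esymf k t.
Proof.
move=> kn pe; rewrite !esymf_coef //.
have E (u : 'I_n -> R) : \prod_(i < n) ('X - (u i)%:P) =
    \prod_(x <- [seq u i | i <- enum 'I_n]) ('X - x%:P).
  by rewrite big_map big_enum.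
by rewrite !E (perm_big _ pe).
Qed.

Lemma esymf_widen (R : realType) n k (sigma : 'I_n -> R) :
  (forall i, 0 <= sigma i) ->
  esymf k (fun i : 'I_n.-1 => sigma (widen_ord (leq_pred n) i)) <= esymf k sigma.
Proof.
move=> s0; set w := widen_ord (leq_pred n).
have wi : injective w by move=> a b /(congr1 val) /= /val_inj.
pose Img := (fun S' : {set 'I_n.-1} => w @: S') @: [set S' : {set 'I_n.-1} | #|S'| == k].
have e1 : esymf k (fun i : 'I_n.-1 => sigma (w i)) =
    \sum_(S in Img) \prod_(j in S) sigma j.
  rewrite big_imset /=; last by move=> S1 S2 _ _; apply: imset_inj.
  rewrite /esymf; apply: eq_big => [S'|S' _]; first by rewrite inE.
  by rewrite big_imset //= => a b _ _; apply: wi.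
have e2 : \sum_(S in Img) \prod_(j in S) sigma j =
    \sum_(S : {set 'I_n} | (#|S| == k) && (S \in Img)) \prod_(j in S) sigma j.
  apply: eq_bigl => S; apply/idP/idP; last by case/andP.
  move=> SI; rewrite SI andbT; case/imsetP: SI => S'; rewrite inE => hS' ->.
  by rewrite card_imset.
rewrite e1 e2 /esymf [X in _ <= X](bigID (mem Img)) /= lerDl.
by apply: sumr_ge0 => S _; apply: prodr_ge0.
Qed.

Lemma char_poly_similar (F : fieldType) n (P X : 'M[F]_n) :
  P \in unitmx -> char_poly (invmx P *m X *m P) = char_poly X.
Proof.
move=> Pu; rewrite /char_poly /char_poly_mx.
have -> : 'X%:M - map_mx (@polyC F) (invmx P *m X *m P) =
   map_mx (@polyC F) (invmx P) *m ('X%:M - map_mx (@polyC F) X) *m map_mx (@polyC F) P.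
  rewrite mulmxBr mulmxBl !map_mxM /= -!mulmxA; congr (_ - _).
  by rewrite mul_scalar_mx -scalemxAr -map_mxM mulVmx // map_mx1 scalemx1.
rewrite !det_mulmx !det_map_mx /= mulrC mulrA -polyCM -det_mulmx mulmxV //.
by rewrite det1 mul1r.
Qed.

Section Qmat.
Variable C : numClosedFieldType.

Lemma adj_diag n (d : 'rV[C]_n) : adj (diag_mx d) = diag_mx (map_mx Num.conj d).
Proof. by rewrite /adj map_diag_mx tr_diag_mx. Qed.

Lemma adjK m n (X : 'M[C]_(m, n)) : adj (adj X) = X.
Proof.
by apply/matrixP => i j; rewrite !mxE conjCK.
Qed.

Variable n : nat.
Hypothesis n0 : (0 < n)%N.
Let Q : 'M[C]_n := 1%:M - (n%:R)^-1 *: const_mx 1.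

Lemma adjQ : adj Q = Q.
Proof.
apply/matrixP => i j; rewrite /Q !mxE rmorphB rmorphM /= rmorph_nat rmorphV ?unitfE ?pnatr_eq0 -?lt0n //.
by rewrite rmorph_nat rmorph1 eq_sym.
Qed.

Lemma QQ : Q *m Q = Q.
Proof.
have JJ : (const_mx 1 : 'M[C]_n) *m (const_mx 1 : 'M[C]_n) = n%:R *: const_mx 1.
  apply/matrixP => i j; rewrite !mxE (eq_bigr (fun _ => 1)) ?sumr_const ?card_ord.
    by rewrite mulr1 -mulr_natl mulr1.
  by move=> l _; rewrite !mxE mulr1.
rewrite /Q mulmxBl !mulmxBr mul1mx mulmx1 -scalemxAl mul1mx -scalemxAr JJ.
rewrite !scalerA mulrAC mulVf ?pnatr_eq0 -?lt0n // mul1r.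
by rewrite subrr subr0.
Qed.

Lemma minorQ (x0 : 'I_n) k (S : {set 'I_n}) : #|S| = k ->
  minor x0 k Q S S = 1 - (n%:R)^-1 *+ k.
Proof.
move=> hS; rewrite /minor -det_1_sub_J; congr (\det _).
apply/matrixP => i j; rewrite /Q !mxE (inj_eq (sub_inj hS)).
by rewrite mulr1.
Qed.
End Qmat.

Lemma inv_sqr (R : fieldType) (x : R) : x^-1 * x ^+ 2 = x.
Proof.
have [->|x0] := eqVneq x 0; first by rewrite invr0 mul0r.
by rewrite expr2 mulrA mulVf // mul1r.
Qed.

Section Main.
Variable R : realType.
Local Notation C := (R[i]).
Local Open Scope complex_scope.
Local Open Scope sesquilinear_scope.

Lemma adjE m n (X : 'M[C]_(m, n)) : adj X = X ^t* .
Proof. by rewrite /adj map_trmx. Qed.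

Lemma main_mx n (x0 : 'I_n) k (z : 'I_n -> C) :
  let D : 'M[C]_n := diag_mx (\row_j z j) in
  let Q : 'M[C]_n := 1%:M - (n%:R)^-1 *: const_mx 1 in
  let A : 'M[C]_n := Q *m D *m Q in
  exists mu : 'I_n -> R, [/\ forall j, 0 <= mu j,
     char_poly (adj A *m A) = \prod_(j < n) ('X - ((mu j ^+ 2)%:C)%:P)
   & esymf k mu <= (1 - (n%:R)^-1 *+ k) * esymf k (fun i => Normc.normc (z i))].
Proof.
move=> D Q A.
have n0 : (0 < n)%N by apply: leq_ltn_trans (ltn_ord x0).
set M := adj A *m A.
have hM : adj M = M by rewrite /M adjM adjK.
have normM : M \is normalmx by apply/normalmxP; rewrite -adjE hM.
set P := spectralmx M; set d := spectral_diag M.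
have Pu : P \is unitarymx := spectral_unitarymx M.
have eM : M = invmx P *m diag_mx d *m P := orthomx_spectralP normM.
have invP : invmx P = adj P by rewrite invmx_unitary // adjE.
have PP : P *m adj P = 1%:M by rewrite adjE; apply/unitarymxP.
set V := adj P.
have VV : V *m adj V = 1%:M by rewrite /V adjK -invP mulVmx // unitarymx_unit.
set B := A *m V.
have eB : adj B *m B = diag_mx d.
  rewrite /B adjM /V adjK -mulmxA [adj A *m _]mulmxA -/M eM invP.
  by rewrite !mulmxA PP mul1mx -mulmxA PP mulmx1.
have dge0 j : 0 <= d 0 j.
  have := congr1 (fun X : 'M[C]_n => X j j) eB; rewrite /= mxE [diag_mx d j j]mxE eqxx mulr1n => <-.
  apply: sumr_ge0 => i _; rewrite !mxE mulrC; exact: mul_conjC_ge0.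
pose mu j := Num.sqrt (complex.Re (d 0 j)).
have mu0 j : 0 <= mu j by apply: sqrtr_ge0.
have dE j : d 0 j = ((mu j ^+ 2)%:C).
  have r := ger0_real (dge0 j).
  have := dge0 j; rewrite -(RRe_real r) ler0c => h.
  by rewrite sqr_sqrtr // RRe_real.
exists mu; split => //.
  rewrite -/M eM char_poly_similar ?unitarymx_unit // char_poly_trig ?diag_mx_is_trig //.
  by apply: eq_bigr => j _; rewrite mxE eqxx mulr1n dE.
pose g : 'rV[C]_n := \row_j ((mu j)^-1)%:C.
set G := B *m diag_mx g.
have gC : map_mx Num.conj g = g by apply/rowP => j; rewrite !mxE; exact: conjc_real.
have aG : adj G = diag_mx g *m adj B by rewrite /G adjM adj_diag gC.
pose muC : 'rV[C]_n := \row_j (mu j)%:C.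
have e1 : adj G *m (Q *m D *m Q) *m V = diag_mx muC.
  rewrite -/A -mulmxA -/B aG -mulmxA eB mulmx_diag; congr diag_mx.
  by apply/rowP => j; rewrite !mxE dE -rmorphM /= inv_sqr.
pose hh : 'rV[C]_n := \row_j ((mu j)^-1 * (mu j) ^+ 2 * (mu j)^-1)%:C.
have e2 : adj G *m G = diag_mx hh.
  rewrite aG /G mulmxA -[diag_mx g *m adj B *m B]mulmxA eB !mulmx_diag.
  by congr diag_mx; apply/rowP => j; rewrite !mxE dE -!rmorphM.
have hh01 j : 0 <= hh 0 j <= 1.
  rewrite mxE inv_sqr -(rmorph1 (real_complex R)) !lecR.
  have [->|mn] := eqVneq (mu j) 0; first by rewrite mul0r lexx ler01.
  by rewrite mulfV // ler01 lexx.
have := @core _ n x0 k Q V G _ muC hh _ e1 e2 hh01 VV (adjQ _ n0) (QQ _ n0) (fun S hS => minorQ _ x0 hS).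
have L : \sum_(T : {set 'I_n} | #|T| == k) \prod_(j in T) muC 0 j = (esymf k mu)%:C.
  rewrite /esymf rmorph_sum; apply: eq_bigr => T _; rewrite rmorph_prod.
  by apply: eq_bigr => j _; rewrite mxE.
have Rr : \sum_(S : {set 'I_n} | #|S| == k) \prod_(i in S) `|(\row_j z j) 0 i| =
    (esymf k (fun i => Normc.normc (z i)))%:C.
  rewrite /esymf rmorph_sum; apply: eq_bigr => T _; rewrite rmorph_prod.
  by apply: eq_bigr => j _; rewrite mxE.
have qE : (1 - n%:R^-1 *+ k : C) = (1 - n%:R^-1 *+ k)%:C.
  by rewrite rmorphB rmorphMn fmorphV rmorph1 rmorph_nat.
rewrite L Rr qE -rmorphM ger0_norm ?ler0c ?lecR //.
by apply: sumr_ge0 => T _; apply: prodr_ge0.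
Qed.
End Main.

Theorem proposition4p2 (R : realType) (n : nat) (hn : (2 <= n)%N)
  (z : 'I_n -> R[i]) (sigma : 'I_n -> R) :
  let D : 'M[R[i]]_n := diag_mx (\row_j z j) in
  let Q : 'M[R[i]]_n := 1%:M - (n%:R)^-1 *: const_mx 1 in
  let A : 'M[R[i]]_n := Q *m D *m Q in
  singular_values_of A sigma ->
  forall k : nat, (1 <= k <= n.-1)%N ->
    esymf k (fun i : 'I_n.-1 => sigma (widen_ord (leq_pred n) i))
    <= ((n - k)%:R / n%:R) * esymf k (fun i => Normc.normc (z i)).
Proof.
move=> D Q A [s0 smono hchar] k /andP[k1 kn1].
have n0 : (0 < n)%N by apply: leq_trans hn.
have kn : (k <= n)%N by apply: leq_trans kn1 (leq_pred n).
pose x0 : 'I_n := Ordinal n0.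
have [mu [mu0 hcharmu hineq]] := main_mx x0 k z.
have E (f : 'I_n -> R[i]) : \prod_(i < n) ('X - (f i)%:P) =
    \prod_(x <- [seq f i | i <- enum 'I_n]) ('X - x%:P).
  by rewrite big_map big_enum.
have pe := prod_XsubC_eq (etrans (etrans (esym (E _)) (etrans (esym hchar) hcharmu)) (E _)).
pose h := fun x : R[i] => Num.sqrt (complex.Re x).
have sq (f : 'I_n -> R) : (forall i, 0 <= f i) ->
   [seq f i | i <- enum 'I_n] = map h [seq ((f i ^+ 2)%:C)%C | i <- enum 'I_n].
  move=> f0; rewrite -[RHS]map_comp; apply: eq_map => i /=.
  by rewrite /h sqrtr_sqr ger0_norm.
have pe2 : perm_eq [seq sigma i | i <- enum 'I_n] [seq mu i | i <- enum 'I_n].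
  by rewrite (sq sigma s0) (sq mu mu0); apply: perm_map.
have eqs := esymf_perm kn pe2.
apply: le_trans (esymf_widen k s0) _.
rewrite eqs; apply: le_trans hineq _.
rewrite le_eqVlt; apply/orP; left; apply/eqP; congr (_ * _).
by rewrite natrB // mulrBl divff ?pnatr_eq0 -?lt0n // mulrC mulr_natr.
Qed.
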